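(* Consider a single flow on a route of $n$ links $\mathcal{T}_0,\dots,\mathcal{T}_{n-1}$ (a line network) under the $\phi$-hop interference model, $0\le\phi\le n-1$. The Ordered Round-Robin policy $ORR$ is deadline-optimal among all admissible cyclic policies, its maximum packet delay is \[ \tau^*(ORR)=n+\phi, \] and its activation rates are $\bar{\mu}^{ORR}_e=\frac{1}{\phi+1}$ for every link $e$ of the route.
   Context: Time is slotted. Under $\phi$-hop interference on the line, distinct links $\mathcal{T}_j,\mathcal{T}_{j'}$ cannot be active in the same slot if $|j-j'|\le\phi$. Each link $\mathcal{T}_j$ has a slice of width $w_j$ for the flow, with a FCFS queue; the flow has deterministic fluid arrival rate $\lambda>0$ per slot at the source. Units arriving in slot $t$ are available for service at the first link from slot $t+1$; an activated link serves $\min\{Q,w_j\}$ from its queue of size $Q$, and units served at a link in slot $t$ are available at the next link from slot $t+1$; a packet's delay is $t_d-t_a$, where $t_a$ is its arrival slot and $t_d$ the slot in which it is served at the last link. Policies are admissible (respect interference, work-conserving) and cyclic: $\mu^\pi(t)=\mu^\pi(t+K^\pi)$ for all $t\ge0$; $\bar{\mu}^\pi_e=\frac1{K^\pi}\sum_{t=0}^{K^\pi-1}\mu^\pi_e(t)$. For a policy $\pi$, $\tau^*(\pi,\boldsymbol{w},\lambda)$ is the maximum delay seen by any packet (equivalently the minimum deadline met by all packets) and $\tau^*(\pi)=\lim_{\lambda\to 0}\tau^*(\pi,\boldsymbol{w},\lambda)$. A cyclic admissible policy $\pi$ is deadline-optimal if $\tau^*(\pi)\le\tau^*(\pi')$ for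 all cyclic admissible $\pi'$. The $ORR$ policy has period $\phi+1$: in slot $t$ it activates every link $\mathcal{T}_j$ with $j\equiv t \pmod{\phi+1}$. *)

(* Defs.v *)
From Stdlib Require Import Reals Lra Lia.
Open Scope R_scope.

(* Links of the route are T_0, ..., T_{n-1}, indexed by nat j < n.
   A (cyclic) policy is an open-loop activation schedule [act t j]
   ("link j is activated in slot t") together with its period K. *)
Record policy := mkPolicy { period : nat ; act : nat -> nat -> bool }.

Definition cyclic (n : nat) (p : policy) : Prop :=
  (0 < period p)%nat /\
  forall t j, (j < n)%nat -> act p (t + period p) j = act p t j.

Definition respects_interference (n phi : nat) (p : policy) : Prop :=
  forall t j j', (j < j')%nat -> (j' < n)%nat ->
    act p t j = true -> act p t j' = true -> (phi < j' - j)%nat.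

(* Admissible: respects interference; work conservation is built into the
   service rule [serv] below (an activated link serves min{Q, w_j}). *)
Definition admissible (n phi : nat) (p : policy) : Prop :=
  respects_interference n phi p.

Definition serv (p : policy) (w : nat -> R) (t : nat) (q : nat -> R) (j : nat) : R :=
  if act p t j then Rmin (q j) (w j) else 0.

(* Fluid arriving in slot t at the source is available at link 0 from slot
   t+1; fluid served by link j in slot t is available at link j+1 from t+1. *)
Fixpoint queue (p : policy) (w : nat -> R) (lam : R) (t : nat) : nat -> R :=
  match t with
  | O => fun _ => 0
  | S t' =>
      let q := queue p w lam t' in
      fun j => q j - serv p w t' q j +
               match j with O => lam | S j' => serv p w t' q j' end
  end.

Definition cum_dep (n : nat) (p : policy) (w : nat -> R) (lam : R) (t : nat) : R :=
  sum_f_R0 (fun s => serv p w s (queue p w lam s) (n - 1)) t.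

(* Fluid unit x (x > 0, FCFS order index) arrives in slot t. *)
Definition arrives_in (lam x : R) (t : nat) : Prop :=
  INR t * lam < x <= INR (t + 1) * lam.

Definition departs_in (n : nat) (p : policy) (w : nat -> R) (lam x : R) (t : nat) : Prop :=
  x <= cum_dep n p w lam t /\ forall s, (s < t)%nat -> cum_dep n p w lam s < x.

Definition deadline_met (n : nat) (p : policy) (w : nat -> R) (lam : R) (d : nat) : Prop :=
  forall x ta, 0 < x -> arrives_in lam x ta ->
    exists td, departs_in n p w lam x td /\ (td - ta <= d)%nat.

(* tau*(pi, w, lam) = D, with None standing for +infinity:
   the minimum deadline met by all packets. *)
Definition max_delay (n : nat) (p : policy) (w : nat -> R) (lam : R) (D : option nat) : Prop :=
  match D with
  | Some d => deadline_met n p w lam d /\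
              forall d', deadline_met n p w lam d' -> (d <= d')%nat
  | None => forall d, ~ deadline_met n p w lam d
  end.

(* tau*(pi) = lim_{lam -> 0+} tau*(pi, w, lam) = L  (None = +infinity). *)
Definition tau_star_is (n : nat) (p : policy) (w : nat -> R) (L : option nat) : Prop :=
  match L with
  | Some d => exists delta, 0 < delta /\
      forall lam, 0 < lam < delta -> max_delay n p w lam (Some d)
  | None => forall M : nat, exists delta, 0 < delta /\
      forall lam, 0 < lam < delta -> ~ deadline_met n p w lam M
  end.

Definition le_ext (a b : option nat) : Prop :=
  match a, b with
  | Some x, Some y => (x <= y)%nat
  | _, None => True
  | None, Some _ => False
  end.

Definition deadline_optimal (n phi : nat) (w : nat -> R) (p : policy) : Prop :=
  admissible n phi p /\ cyclic n p /\
  forall p' L L', admissible n phi p' -> cyclic n p' ->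
    tau_star_is n p w L -> tau_star_is n p' w L' -> le_ext L L'.

Definition rate (p : policy) (e : nat) : R :=
  / INR (period p) *
  sum_f_R0 (fun t => if act p t e then 1 else 0) (period p - 1).

Definition ORR (phi : nat) : policy :=
  mkPolicy (S phi) (fun t j => Nat.eqb (j mod S phi) (t mod S phi)).

(* Main.v *)
Require Import Defs.
From Stdlib Require Import Reals Lra Lia Arith Classical Bool.
Open Scope R_scope.
Open Scope R_scope.

Fixpoint Cum (p : policy) (w : nat -> R) (lam : R) (j s : nat) : R :=
  match s with
  | O => 0
  | S s' => Cum p w lam j s' + serv p w s' (queue p w lam s') j
  end.

Lemma queue_Cum0 p w lam s : queue p w lam s 0 = lam * INR s - Cum p w lam 0 s.
Proof.
  induction s as [|s IH]; simpl; [ring|].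
  rewrite IH. destruct s; simpl; ring.
Qed.

Lemma queue_CumS p w lam s j :
  queue p w lam s (S j) = Cum p w lam j s - Cum p w lam (S j) s.
Proof.
  induction s as [|s IH]; simpl; [ring|].
  rewrite IH. ring.
Qed.

Lemma serv_le p w t q j : act p t j = true -> serv p w t q j <= q j.
Proof. intros H; unfold serv; rewrite H; apply Rmin_l. Qed.

Lemma serv_0 p w t q j : act p t j = false -> serv p w t q j = 0.
Proof. intros H; unfold serv; rewrite H; reflexivity. Qed.

Fixpoint chain (p : policy) (j a e : nat) : Prop :=
  match j with
  | O => exists b, (a <= b < e)%nat /\ act p b 0 = true
  | S j' => exists b, (b < e)%nat /\ act p b (S j') = true /\ chain p j' a b
  end.

Lemma Cum_bound p w lam : 0 <= lam ->
  forall j a s, ~ chain p j a s -> Cum p w lam j s <= lam * INR (a - 1).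
Proof.
  intros Hl j. induction j as [|j IHj]; intros a s; induction s as [|s IHs]; intros Hc;
    simpl Cum.
  - apply Rmult_le_pos; [lra| apply pos_INR].
  - assert (Hc' : ~ chain p 0 a s).
    { intros [b [Hb Hact]]. apply Hc. exists b. split; [lia|auto]. }
    specialize (IHs Hc').
    destruct (act p s 0) eqn:E.
    + assert (Hsa : (s < a)%nat).
      { destruct (Nat.lt_ge_cases s a) as [h|h]; auto. exfalso. apply Hc. exists s. split; [lia|auto]. }
      pose proof (serv_le p w s (queue p w lam s) 0 E) as H1.
      rewrite queue_Cum0 in H1.
      assert (INR s <= INR (a - 1)) by (apply le_INR; lia).
      assert (lam * INR s <= lam * INR (a-1)) by (apply Rmult_le_compat_l; lra).
      lra.
    + rewrite serv_0 by auto. lra.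
  - apply Rmult_le_pos; [lra| apply pos_INR].
  - assert (Hc' : ~ chain p (S j) a s).
    { intros [b [Hb [Hact Hch]]]. apply Hc. exists b. split; [lia|auto]. }
    specialize (IHs Hc').
    destruct (act p s (S j)) eqn:E.
    + assert (Hn : ~ chain p j a s).
      { intros Hch. apply Hc. exists s. split; [lia|auto]. }
      pose proof (IHj a s Hn).
      pose proof (serv_le p w s (queue p w lam s) (S j) E) as H1.
      rewrite queue_CumS in H1. lra.
    + rewrite serv_0 by auto. lra.
Qed.

Lemma cum_dep_Cum n p w lam t : cum_dep n p w lam t = Cum p w lam (n-1) (S t).
Proof.
  unfold cum_dep. induction t as [|t IH].
  - simpl. ring.
  - change (sum_f_R0 (fun s => serv p w s (queue p w lam s) (n - 1)) (S t)) with
      (sum_f_R0 (fun s => serv p w s (queue p w lam s) (n - 1)) t +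
       serv p w (S t) (queue p w lam (S t)) (n - 1)).
    rewrite IH. reflexivity.
Qed.

Lemma chain_down p : forall k j a e, chain p (j + k) a e ->
  exists e', chain p j a e' /\ (e' + k <= e)%nat.
Proof.
  induction k as [|k IH]; intros j a e H.
  - exists e. rewrite Nat.add_0_r in H. split; [auto|lia].
  - rewrite Nat.add_succ_r in H. destruct H as [b [Hb [_ Hch]]].
    destruct (IH j a b Hch) as [e' [H1 H2]]. exists e'. split; [auto|lia].
Qed.

Lemma chain_act p : forall j a e, chain p j a e -> forall i, (i <= j)%nat -> exists b, act p b i = true.
Proof.
  induction j as [|j IH]; intros a e H i Hi.
  - destruct H as [b [_ Hb]]. exists b. replace i with 0%nat by lia. auto.
  - destruct H as [b [_ [Hb Hch]]].
    destruct (Nat.eq_dec i (S j)) as [->|Hne]; [exists b; auto|].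
    apply (IH a b Hch). lia.
Qed.
Open Scope nat_scope.

Fixpoint cnt (p : policy) (i lo len : nat) : nat :=
  match len with
  | O => 0
  | S l => cnt p i lo l + (if act p (lo + l) i then 1 else 0)
  end.

Fixpoint sumc (m : nat) (f : nat -> nat) : nat :=
  match m with O => f 0 | S m' => sumc m' f + f (S m') end.

Lemma sumc_ext m f g : (forall i, i <= m -> f i = g i) -> sumc m f = sumc m g.
Proof. induction m; simpl; intros H; [apply H; lia|]. rewrite IHm by (intros; apply H; lia). rewrite H; lia. Qed.

Lemma sumc_add m f g : sumc m (fun i => f i + g i) = sumc m f + sumc m g.
Proof. induction m; simpl; lia. Qed.

Lemma cnt_mono p i lo l1 l2 : l1 <= l2 -> cnt p i lo l1 <= cnt p i lo l2.
Proof. induction 1; simpl; lia. Qed.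

Lemma cnt_one p i lo len s : lo <= s < lo + len -> act p s i = true -> 1 <= cnt p i lo len.
Proof.
  intros Hs Ha. apply Nat.le_trans with (cnt p i lo (S (s - lo))).
  - simpl. replace (lo + (s - lo)) with s by lia. rewrite Ha. lia.
  - apply cnt_mono. lia.
Qed.

Lemma cnt_two p i lo len s1 s2 : lo <= s1 -> s1 < s2 -> s2 < lo + len ->
  act p s1 i = true -> act p s2 i = true -> 2 <= cnt p i lo len.
Proof.
  intros H1 H2 H3 A1 A2. apply Nat.le_trans with (cnt p i lo (S (s2 - lo))).
  - simpl. replace (lo + (s2 - lo)) with s2 by lia. rewrite A2.
    pose proof (cnt_one p i lo (s2 - lo) s1 ltac:(lia) A1). lia.
  - apply cnt_mono. lia.
Qed.

Section Comb.
Variables (p : policy) (n phi : nat).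
Hypothesis Hn : 0 < n.
Hypothesis Hphi : phi <= n - 1.
Hypothesis Hint : respects_interference n phi p.
Hypothesis Hcyc : cyclic n p.

Lemma conflict t i k : i < k -> k <= phi -> act p t i = true -> act p t k = true -> False.
Proof. intros H1 H2 A1 A2. pose proof (Hint t i k H1 ltac:(lia) A1 A2). lia. Qed.

Lemma slot_zero s k m : m < k -> k <= phi -> act p s k = true ->
  sumc m (fun i => if act p s i then 1 else 0) = 0.
Proof.
  intros Hm Hk Ha. induction m as [|m IH]; simpl.
  - destruct (act p s 0) eqn:E; auto. exfalso; apply (conflict s 0 k); auto; lia.
  - rewrite IH by lia. destruct (act p s (S m)) eqn:E; auto. exfalso; apply (conflict s (S m) k); auto.
Qed.

Lemma slot_le1 s m : m <= phi -> sumc m (fun i => if act p s i then 1 else 0) <= 1.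
Proof.
  induction m as [|m IH]; intros Hm; simpl.
  - destruct (act p s 0); lia.
  - destruct (act p s (S m)) eqn:E.
    + rewrite (slot_zero s (S m) m) by (auto; lia). lia.
    + specialize (IH ltac:(lia)). lia.
Qed.

Lemma tot_le lo len : sumc phi (fun i => cnt p i lo len) <= len.
Proof.
  induction len as [|l IH]; simpl.
  - clear. induction phi; simpl; lia.
  - rewrite sumc_add. pose proof (slot_le1 (lo + l) phi (le_n _)). lia.
Qed.

Lemma cyc_iter t m i : i < n -> act p (t + m * period p) i = act p t i.
Proof.
  intros Hi. destruct Hcyc as [_ Hc]. induction m as [|m IH].
  - rewrite Nat.add_0_r. auto.
  - replace (t + S m * period p) with ((t + m * period p) + period p) by lia.
    rewrite Hc; auto.
Qed.

Fixpoint lastb (i b : nat) : nat :=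
  match b with O => 0 | S b' => if act p b' i then b' else lastb i b' end.

Lemma lastb_spec i b : (exists y, y < b /\ act p y i = true) ->
  lastb i b < b /\ act p (lastb i b) i = true /\
  (forall y, lastb i b < y < b -> act p y i = false) /\
  (forall y, y < b -> act p y i = true -> y <= lastb i b).
Proof.
  induction b as [|b IH]; intros [y [Hy Ha]]; [lia|]. simpl.
  destruct (act p b i) eqn:E.
  - split; [lia|]. split; auto. split; [intros; lia|]. intros; lia.
  - assert (Hyb : y < b).
    { destruct (Nat.eq_dec y b); [subst; congruence| lia]. }
    destruct (IH (ex_intro _ y (conj Hyb Ha))) as [A [B [C D]]].
    split; [lia|]. split; auto. split.
    + intros z Hz. destruct (Nat.eq_dec z b); [subst; auto| apply C; lia].
    + intros z Hz Haz. destruct (Nat.eq_dec z b); [subst; congruence| apply D; auto; lia].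
Qed.

Variable u : nat.
Fixpoint rdown (d j : nat) : nat :=
  match d with O => u | S d' => lastb j (rdown d' (S j)) end.
Definition r (j : nat) := rdown (phi - j) j.

Lemma r_step j : j < phi -> r j = lastb j (r (S j)).
Proof. intros H. unfold r. replace (phi - j) with (S (phi - S j)) by lia. reflexivity. Qed.

Hypothesis Hall : forall i, i <= phi -> exists c, c < period p /\ act p c i = true.
Hypothesis Hu : phi * period p <= u /\ act p u phi = true.

Lemma r_props : forall d j, j + d = phi ->
  j * period p <= r j /\ act p (r j) j = true /\
  (j < phi -> r j < r (S j) /\ forall y, r j < y < r (S j) -> act p y j = false).
Proof.
  induction d as [|d IH]; intros j Hj.
  - replace j with phi by lia. unfold r. rewrite Nat.sub_diag. simpl.
    split; [tauto|]. split; [tauto|]. intros; lia.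
  - destruct (IH (S j) ltac:(lia)) as [B1 [B2 _]].
    destruct (Hall j ltac:(lia)) as [c [Hc Hac]].
    assert (Hy : exists y, y < r (S j) /\ act p y j = true).
    { exists (c + j * period p). split.
      - simpl in B1. lia.
      - rewrite cyc_iter; auto; lia. }
    destruct (lastb_spec j (r (S j)) Hy) as [A [B [C D]]].
    rewrite <- r_step in A, B, C, D by lia.
    split; [|split; [auto|]].
    + assert (c + j * period p <= r j).
      { apply D. simpl in B1. lia. rewrite cyc_iter; auto; lia. } lia.
    + intros _. split; auto.
Qed.

Lemma r_mono : forall j, j < phi -> r 0 < r (S j).
Proof.
  induction j; intros H.
  - destruct (r_props phi 0 ltac:(lia)) as [_ [_ X]]. apply X; lia.
  - destruct (r_props (phi - S j) (S j) ltac:(lia)) as [_ [_ X]].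
    specialize (IHj ltac:(lia)). destruct (X H). lia.
Qed.

Definition cntlb (i : nat) := if Nat.eqb i 0 then 1 else 2.

Lemma forward : forall j e, j <= phi -> chain p j (S (r 0)) e ->
  exists b, b < e /\ act p b j = true /\ r j < b /\ (j < phi -> r (S j) < b) /\
    forall i, i <= j -> cntlb i <= cnt p i (S (r 0)) (b - r 0).
Proof.
  induction j as [|j IH]; intros e Hj Hch.
  - destruct Hch as [b [Hb Ha]]. exists b. split; [lia|]. split; auto. split; [lia|]. split.
    + intros Hp. destruct (r_props (phi - 0) 0 ltac:(lia)) as [_ [_ X]].
      destruct (X Hp) as [X1 X2].
      destruct (Nat.lt_ge_cases (r 1) b) as [h|h]; auto.
      destruct (Nat.eq_dec b (r 1)) as [->|hne].
      * destruct (r_props (phi - 1) 1 ltac:(lia)) as [_ [Y _]].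
        exfalso. apply (conflict (r 1) 0 1); auto; lia.
      * rewrite X2 in Ha by lia. discriminate.
    + intros i Hi. replace i with 0 by lia. unfold cntlb; simpl.
      apply (cnt_one p 0 (S (r 0)) (b - r 0) b); auto; lia.
  - destruct Hch as [b [Hb [Ha Hch]]].
    destruct (IH b ltac:(lia) Hch) as [b' [Hb' [Ha' [R1 [R2 Hc]]]]].
    specialize (R2 ltac:(lia)).
    exists b. split; auto. split; auto. split; [lia|]. split.
    + intros Hp. destruct (r_props (phi - S j) (S j) ltac:(lia)) as [_ [_ X]].
      destruct (X Hp) as [X1 X2].
      destruct (Nat.lt_ge_cases (r (S (S j))) b) as [h|h]; auto.
      destruct (Nat.eq_dec b (r (S (S j)))) as [->|hne].
      * destruct (r_props (phi - S (S j)) (S (S j)) ltac:(lia)) as [_ [Y _]].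
        exfalso. apply (conflict (r (S (S j))) (S j) (S (S j))); auto; lia.
      * rewrite X2 in Ha by lia. discriminate.
    + intros i Hi. destruct (Nat.eq_dec i (S j)) as [->|hne].
      * unfold cntlb; simpl.
        destruct (r_props (phi - S j) (S j) ltac:(lia)) as [_ [Y _]].
        pose proof (r_mono j ltac:(lia)).
        apply (cnt_two p (S j) (S (r 0)) (b - r 0) (r (S j)) b); auto; lia.
      * apply Nat.le_trans with (cnt p i (S (r 0)) (b' - r 0)); [apply Hc; lia|].
        apply cnt_mono; lia.
Qed.

Lemma sum_lb : forall m len, m <= phi ->
  (forall i, i <= m -> cntlb i <= cnt p i (S (r 0)) len) ->
  2 * m + 1 <= sumc m (fun i => cnt p i (S (r 0)) len).
Proof.
  induction m; intros len Hm H; simpl.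
  - specialize (H 0 (le_n _)). unfold cntlb in H; simpl in H. lia.
  - pose proof (IHm len ltac:(lia) ltac:(intros; apply H; lia)).
    specialize (H (S m) (le_n _)). unfold cntlb in H; simpl in H. lia.
Qed.

Lemma comb_main : forall e, chain p phi (S (r 0)) e -> r 0 + 2 * phi + 1 < e.
Proof.
  intros e Hch. destruct (forward phi e (le_n _) Hch) as [b [Hb [_ [_ [_ Hc]]]]].
  pose proof (sum_lb phi (b - r 0) (le_n _) Hc).
  pose proof (tot_le (S (r 0)) (b - r 0)). lia.
Qed.

End Comb.

Lemma comb (p : policy) (n phi : nat) : 0 < n -> phi <= n - 1 ->
  respects_interference n phi p -> cyclic n p ->
  exists r0, forall e, chain p (n - 1) (S r0) e -> r0 + n + phi < e.
Proof.
  intros Hn Hphi Hint Hcyc.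
  assert (Hd : forall r0, (forall e, chain p phi (S r0) e -> r0 + 2 * phi + 1 < e) ->
                 forall e, chain p (n - 1) (S r0) e -> r0 + n + phi < e).
  { intros r0 H e Hch. replace (n - 1) with (phi + (n - 1 - phi)) in Hch by lia.
    destruct (chain_down p _ _ _ _ Hch) as [e' [H1 H2]]. specialize (H e' H1). lia. }
  destruct (classic (forall i, i <= phi -> exists c, act p c i = true)) as [Hall|Hno].
  - assert (HK := proj1 Hcyc).
    assert (Hall' : forall i, i <= phi -> exists c, c < period p /\ act p c i = true).
    { intros i Hi. destruct (Hall i Hi) as [c Hac]. exists (c mod period p). split.
      - apply Nat.mod_upper_bound; lia.
      - rewrite <- Hac. rewrite (Nat.div_mod_eq c (period p)) at 2.
        replace (period p * (c / period p) + c mod period p) with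
           (c mod period p + (c / period p) * period p) by lia.
        rewrite (cyc_iter p n phi); auto; lia. }
    destruct (Hall' phi (le_n _)) as [c [Hc1 Hc2]].
    set (u := c + phi * period p).
    assert (Hu : phi * period p <= u /\ act p u phi = true).
    { split; [unfold u; lia|]. unfold u. rewrite (cyc_iter p n phi); auto; lia. }
    exists (r p phi u 0). apply Hd. intros e. eapply (comb_main p n phi); eauto.
  - exists 0. apply Hd. intros e Hch. exfalso. apply Hno. intros i Hi.
    apply (chain_act p phi _ _ Hch). auto.
Qed.
Open Scope R_scope.

Lemma GLB n phi p w lam d : (0 < n)%nat -> (phi <= n - 1)%nat -> admissible n phi p ->
  cyclic n p -> 0 < lam -> deadline_met n p w lam d -> (n + phi <= d)%nat.
Proof.
  intros Hn Hphi Hadm Hcyc Hl Hdl.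
  destruct (comb p n phi Hn Hphi Hadm Hcyc) as [r0 Hr].
  assert (Hx : 0 < INR (r0 + 1) * lam).
  { apply Rmult_lt_0_compat; auto. apply lt_0_INR. lia. }
  assert (Ha : arrives_in lam (INR (r0 + 1) * lam) r0).
  { unfold arrives_in. split; [|lra]. rewrite plus_INR. simpl. lra. }
  destruct (Hdl _ _ Hx Ha) as [td [[Hdep _] Hle]].
  rewrite cum_dep_Cum in Hdep.
  destruct (classic (chain p (n-1) (S r0) (S td))) as [Hc|Hc].
  - specialize (Hr _ Hc). lia.
  - pose proof (Cum_bound p w lam ltac:(lra) (n-1) (S r0) (S td) Hc).
    replace (S r0 - 1)%nat with r0 in H by lia.
    rewrite plus_INR in Hdep. change (INR 1) with 1 in Hdep. exfalso. nra.
Qed.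
Open Scope R_scope.

Open Scope nat_scope.
Section Mod.
Variable K : nat.
Hypothesis HK : (0 < K)%nat.

Lemma modS a : ((S a) mod K = if Nat.eqb (S (a mod K)) K then 0 else S (a mod K))%nat.
Proof.
  pose proof (Nat.div_mod_eq a K) as E. pose proof (Nat.mod_upper_bound a K ltac:(lia)) as B.
  destruct (Nat.eqb_spec (S (a mod K)) K) as [h|h].
  - symmetry. apply (Nat.mod_unique _ _ (a / K + 1)); [lia|]. nia.
  - symmetry. apply (Nat.mod_unique _ _ (a / K)); [lia|]. lia.
Qed.

Lemma modS_iff a b : ((S a) mod K = (S b) mod K <-> a mod K = b mod K)%nat.
Proof.
  rewrite !modS. pose proof (Nat.mod_upper_bound a K ltac:(lia)).
  pose proof (Nat.mod_upper_bound b K ltac:(lia)).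
  destruct (Nat.eqb_spec (S (a mod K)) K); destruct (Nat.eqb_spec (S (b mod K)) K); split; lia.
Qed.

Lemma modadd_iff a b c : ((a + c) mod K = (b + c) mod K <-> a mod K = b mod K)%nat.
Proof.
  induction c.
  - rewrite !Nat.add_0_r. tauto.
  - rewrite !Nat.add_succ_r. rewrite modS_iff. auto.
Qed.

Lemma divS m : ((S m) / K = m / K + (if Nat.eqb ((S m) mod K) 0 then 1 else 0))%nat.
Proof.
  rewrite modS. pose proof (Nat.div_mod_eq m K) as E. pose proof (Nat.mod_upper_bound m K ltac:(lia)) as B.
  destruct (Nat.eqb_spec (S (m mod K)) K) as [h|h]; simpl.
  - symmetry. apply (Nat.div_unique _ _ _ 0); [lia|]. nia.
  - rewrite Nat.add_0_r. symmetry. apply (Nat.div_unique _ _ _ (S (m mod K))); [lia|]. lia.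
Qed.

Lemma mod0_ge t : (t mod K = 0 -> t <> 0 -> K <= t)%nat.
Proof.
  intros H1 H2. pose proof (Nat.div_mod_eq t K) as E. rewrite H1 in E.
  destruct (t / K); nia.
Qed.

Lemma mod_lt_K t : (t mod K < K)%nat.
Proof. apply Nat.mod_upper_bound; lia. Qed.
End Mod.
Open Scope R_scope.
Open Scope bool_scope.

Section ORRq.
Variables (n phi : nat) (w : nat -> R) (lam : R).
Let K := S phi.
Hypothesis Hlam : 0 <= lam.
Hypothesis Hw : forall j, (j < n)%nat -> INR K * lam <= w j.

Definition Q0 (t : nat) : nat :=
  if Nat.eqb t 0 then 0 else if Nat.eqb (t mod K) 0 then K else t mod K.

Definition Qf (t j : nat) : R :=
  match j with
  | O => lam * INR (Q0 t)
  | S _ => if (K + j <=? t)%nat && Nat.eqb (j mod K) (t mod K) then INR K * lam else 0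
  end.

Lemma act_ORR t j : act (ORR phi) t j = Nat.eqb (j mod K) (t mod K).
Proof. reflexivity. Qed.

Lemma Q0_le t : (Q0 t <= K)%nat.
Proof.
  unfold Q0. destruct (Nat.eqb t 0); [lia|]. destruct (Nat.eqb (t mod K) 0); [lia|].
  pose proof (mod_lt_K K ltac:(unfold K; lia) t). lia.
Qed.

Lemma Qf_le t j : Qf t j <= INR K * lam.
Proof.
  destruct j; unfold Qf.
  - pose proof (le_INR _ _ (Q0_le t)). nra.
  - destruct (_ && _); [lra|]. apply Rmult_le_pos; [apply pos_INR|lra].
Qed.

Lemma Q0_S t : Q0 (S t) = if Nat.eqb (t mod K) 0 then 1%nat else S (Q0 t).
Proof.
  assert (HK : (0 < K)%nat) by (unfold K; lia).
  unfold Q0. change (Nat.eqb (S t) 0) with false. cbv iota. rewrite (modS K HK t).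
  pose proof (mod_lt_K K HK t).
  assert (t = 0%nat -> t mod K = 0%nat) by (intros ->; apply Nat.mod_0_l; lia).
  destruct (Nat.eqb_spec (S (t mod K)) K) as [h1|h1];
  destruct (Nat.eqb_spec (t mod K) 0) as [h2|h2];
  destruct (Nat.eqb_spec t 0) as [h3|h3]; cbn [Nat.eqb]; try lia.
Qed.

Lemma queue_ORR : forall t j, (j < n)%nat -> queue (ORR phi) w lam t j = Qf t j.
Proof.
  assert (HK : (0 < K)%nat) by (unfold K; lia).
  induction t as [|t IH]; intros j Hj.
  - destruct j; simpl.
    + unfold Q0. simpl. ring.
    + replace (K + S j <=? 0)%nat with false by (symmetry; apply Nat.leb_gt; lia). reflexivity.
  - assert (Hs : forall i, (i < n)%nat -> serv (ORR phi) w t (queue (ORR phi) w lam t) i =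
               if act (ORR phi) t i then Qf t i else 0).
    { intros i Hi. unfold serv. destruct (act (ORR phi) t i); auto.
      rewrite IH by auto. apply Rmin_left. pose proof (Qf_le t i). pose proof (Hw i Hi). lra. }
    simpl queue. rewrite Hs by auto. rewrite IH by auto. rewrite act_ORR.
    destruct j as [|j].
    +
      rewrite Nat.mod_0_l by lia. unfold Qf. rewrite Q0_S.
      destruct (Nat.eqb_spec 0 (t mod K)) as [h|h];
        destruct (Nat.eqb_spec (t mod K) 0) as [h'|h']; try lia.
      * simpl INR at 3. ring.
      * rewrite S_INR. ring.
    +
      assert (E1 : Qf t (S j) - (if Nat.eqb (S j mod K) (t mod K) then Qf t (S j) else 0) = 0).
      { destruct (Nat.eqb (S j mod K) (t mod K)) eqn:E; [ring|].
        unfold Qf. rewrite E. rewrite andb_false_r. ring. }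
      rewrite E1. rewrite Rplus_0_l.
      destruct j as [|j].
      * rewrite Hs by lia. rewrite act_ORR. rewrite Nat.mod_0_l by lia. unfold Qf; cbv beta iota. unfold Q0.
        destruct (Nat.eqb_spec 0 (t mod K)) as [h|h].
        -- assert (E2 : Nat.eqb (1 mod K) (S t mod K) = true).
           { apply Nat.eqb_eq. apply modS_iff; auto. rewrite Nat.mod_0_l; lia. }
           rewrite E2, andb_true_r.
           destruct (Nat.eqb_spec t 0) as [ht|ht].
           ++ subst. replace (K + 1 <=? 1)%nat with false by (symmetry; apply Nat.leb_gt; lia). simpl. ring.
           ++ replace (K + 1 <=? S t)%nat with true.
              ** replace (Nat.eqb (t mod K) 0) with true by (symmetry; apply Nat.eqb_eq; auto). ring.
              ** symmetry. apply Nat.leb_le. pose proof (mod0_ge K HK t ltac:(auto) ht). lia.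
        -- assert (E2 : Nat.eqb (1 mod K) (S t mod K) = false).
           { apply Nat.eqb_neq. intro E. apply (proj1 (modS_iff K HK 0 t)) in E. rewrite Nat.mod_0_l in E; lia. }
           rewrite E2, andb_false_r. reflexivity.
      * rewrite Hs by lia. rewrite act_ORR. unfold Qf; cbv beta iota.
        destruct (Nat.eqb_spec (S j mod K) (t mod K)) as [h|h].
        -- assert (E2 : Nat.eqb (S (S j) mod K) (S t mod K) = true).
           { apply Nat.eqb_eq. apply modS_iff; auto. }
           rewrite E2, !andb_true_r.
           destruct (Nat.leb_spec (K + S j) t); destruct (Nat.leb_spec (K + S (S j)) (S t)); try lia; ring.
        -- assert (E2 : Nat.eqb (S (S j) mod K) (S t mod K) = false).
           { apply Nat.eqb_neq. intro E. apply (proj1 (modS_iff K HK _ _)) in E; auto. }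
           rewrite E2, !andb_false_r. reflexivity.
Qed.

Definition Sf (nl t : nat) : R :=
  if (K + nl <=? t)%nat && Nat.eqb (nl mod K) (t mod K) then INR K * lam else 0.

Lemma serv_ORR_last nl t : (nl < n)%nat ->
  serv (ORR phi) w t (queue (ORR phi) w lam t) nl = Sf nl t.
Proof.
  assert (HK : (0 < K)%nat) by (unfold K; lia).
  intros Hnl. unfold serv. rewrite act_ORR.
  destruct (Nat.eqb (nl mod K) (t mod K)) eqn:E.
  - rewrite queue_ORR by auto. rewrite Rmin_left.
    2: { pose proof (Qf_le t nl). pose proof (Hw nl Hnl). lra. }
    unfold Sf. rewrite E, andb_true_r. destruct nl as [|nl].
    + unfold Qf; cbv beta iota. unfold Q0. rewrite Nat.mod_0_l in E by lia. apply Nat.eqb_eq in E.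
      destruct (Nat.eqb_spec t 0) as [ht|ht].
      * subst. simpl. replace (K + 0 <=? 0)%nat with false by (symmetry; apply Nat.leb_gt; lia). ring.
      * replace (Nat.eqb (t mod K) 0) with true by (symmetry; apply Nat.eqb_eq; auto).
        replace (K + 0 <=? t)%nat with true. ring.
        symmetry. apply Nat.leb_le. pose proof (mod0_ge K HK t ltac:(auto) ht). lia.
    + unfold Qf; cbv beta iota. rewrite E, andb_true_r. reflexivity.
  - unfold Sf. rewrite E, andb_false_r. reflexivity.
Qed.

Lemma cum_dep_ORR t : (0 < n)%nat ->
  cum_dep n (ORR phi) w lam t = INR K * lam * INR ((t - (n - 1)) / K).
Proof.
  assert (HK : (0 < K)%nat) by (unfold K; lia).
  intros Hn. unfold cum_dep. induction t as [|t IH].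
  - simpl sum_f_R0. rewrite serv_ORR_last by lia. unfold Sf.
    replace (K + (n-1) <=? 0)%nat with false by (symmetry; apply Nat.leb_gt; lia).
    rewrite Nat.sub_0_l, Nat.div_0_l by lia. simpl. ring.
  - change (sum_f_R0 (fun s => serv (ORR phi) w s (queue (ORR phi) w lam s) (n - 1)) (S t)) with
      (sum_f_R0 (fun s => serv (ORR phi) w s (queue (ORR phi) w lam s) (n - 1)) t +
       serv (ORR phi) w (S t) (queue (ORR phi) w lam (S t)) (n - 1)).
    rewrite IH. rewrite serv_ORR_last by lia. unfold Sf.
    destruct (Nat.le_gt_cases (n - 1) t) as [Hle|Hgt].
    + replace (S t - (n - 1))%nat with (S (t - (n - 1))) by lia.
      rewrite (divS K HK).
      assert (Hc : ((K + (n - 1) <=? S t) && Nat.eqb ((n - 1) mod K) (S t mod K))%bool =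
                   Nat.eqb (S (t - (n - 1)) mod K) 0).
      { destruct (Nat.eqb_spec (S (t - (n - 1)) mod K) 0) as [h|h].
        - pose proof (mod0_ge K HK _ h ltac:(lia)).
          replace (K + (n - 1) <=? S t)%nat with true by (symmetry; apply Nat.leb_le; lia).
          rewrite andb_true_l. apply Nat.eqb_eq.
          replace (S t) with (S (t - (n - 1)) + (n - 1))%nat by lia.
          replace (n - 1)%nat with (0 + (n - 1))%nat at 1 by lia.
          symmetry. apply (proj2 (modadd_iff K HK _ _ _)). rewrite h, Nat.mod_0_l; lia.
        - destruct (Nat.eqb_spec ((n - 1) mod K) (S t mod K)) as [h2|h2]; [|apply andb_false_r].
          exfalso. apply h.
          replace (S t) with (S (t - (n - 1)) + (n - 1))%nat in h2 by lia.
          replace (n - 1)%nat with (0 + (n - 1))%nat in h2 at 1 by lia.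
          apply (proj1 (modadd_iff K HK _ _ _)) in h2. rewrite Nat.mod_0_l in h2; lia. }
      rewrite Hc. destruct (Nat.eqb (S (t - (n - 1)) mod K) 0).
      * rewrite plus_INR. change (INR 1) with 1. ring.
      * rewrite Nat.add_0_r. ring.
    + replace (S t - (n - 1))%nat with 0%nat by lia. replace (t - (n - 1))%nat with 0%nat by lia.
      replace (K + (n-1) <=? S t)%nat with false by (symmetry; apply Nat.leb_gt; lia). simpl. ring.
Qed.

End ORRq.
Open Scope R_scope.

Lemma min_w n w : (forall j, (j < n)%nat -> 0 < w j) ->
  exists m, 0 < m /\ forall j, (j < n)%nat -> m <= w j.
Proof.
  induction n as [|n IH]; intros H.
  - exists 1. split; [lra|]. intros; lia.
  - destruct IH as [m [Hm Hj]]; [intros; apply H; lia|].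
    exists (Rmin m (w n)). split.
    + apply Rmin_pos; [auto| apply H; lia].
    + intros j Hjn. destruct (Nat.eq_dec j n) as [->|hne].
      * apply Rmin_r.
      * eapply Rle_trans; [apply Rmin_l| apply Hj; lia].
Qed.

Lemma ORR_adm n phi : admissible n phi (ORR phi).
Proof.
  intros t j j' Hjj' Hj' A1 A2. rewrite act_ORR in A1, A2.
  apply Nat.eqb_eq in A1. apply Nat.eqb_eq in A2.
  assert (HK : (0 < S phi)%nat) by lia.
  assert (E : ((j' - j) mod S phi = 0)%nat).
  { assert (E2 : (((j' - j) + j) mod S phi = (0 + j) mod S phi)%nat).
    { replace ((j' - j) + j)%nat with j' by lia. rewrite Nat.add_0_l. congruence. }
    apply (proj1 (modadd_iff _ HK _ _ _)) in E2. rewrite E2. apply Nat.mod_0_l; lia. }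
  pose proof (mod0_ge _ HK _ E ltac:(lia)). lia.
Qed.

Lemma ORR_cyc n phi : cyclic n (ORR phi).
Proof.
  split; [simpl; lia|]. intros t j _. rewrite !act_ORR.
  change (period (ORR phi)) with (S phi).
  replace (t + S phi)%nat with (t + 1 * S phi)%nat by lia. rewrite Nat.Div0.mod_add. reflexivity.
Qed.

Lemma ORR_tau n phi w : (0 < n)%nat -> (phi <= n - 1)%nat ->
  (forall j, (j < n)%nat -> 0 < w j) ->
  tau_star_is n (ORR phi) w (Some (n + phi)%nat).
Proof.
  intros Hn Hphi Hw. destruct (min_w n w Hw) as [m [Hm Hmj]].
  set (K := S phi).
  assert (HK : 0 < INR K) by (apply lt_0_INR; unfold K; lia).
  exists (m / INR K). split; [apply Rdiv_lt_0_compat; auto|].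
  intros lam [Hl1 Hl2].
  assert (HKl : INR K * lam < m).
  { apply (Rmult_lt_compat_l (INR K)) in Hl2; auto. unfold Rdiv in Hl2.
    rewrite (Rmult_comm m), <- Rmult_assoc, Rinv_r in Hl2 by lra. lra. }
  assert (Hw' : forall j, (j < n)%nat -> INR K * lam <= w j).
  { intros j Hj. specialize (Hmj j Hj). lra. }
  split.
  - intros x ta Hx [A1 A2].
    set (q := (ta / K)%nat).
    pose proof (Nat.div_mod_eq ta K) as Eta. pose proof (Nat.mod_upper_bound ta K ltac:(unfold K; lia)) as Bta.
    fold q in Eta.
    exists (n - 1 + K * (q + 1))%nat. split; [split|].
    + rewrite (cum_dep_ORR n phi w lam ltac:(lra) Hw' _ Hn). fold K.
      replace (n - 1 + K * (q + 1) - (n - 1))%nat with ((q + 1) * K)%nat by lia.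
      rewrite Nat.div_mul by (unfold K; lia).
      assert (Hle : (ta + 1 <= K * (q + 1))%nat) by nia.
      apply le_INR in Hle. rewrite mult_INR in Hle.
      assert (INR (ta + 1) * lam <= INR K * INR (q + 1) * lam) by (apply Rmult_le_compat_r; lra).
      nra.
    + intros s Hs. rewrite (cum_dep_ORR n phi w lam ltac:(lra) Hw' _ Hn). fold K.
      assert (Hd : ((s - (n - 1)) / K < q + 1)%nat).
      { apply Nat.Div0.div_lt_upper_bound. lia. }
      assert (Hle : (K * ((s - (n - 1)) / K) <= ta)%nat) by nia.
      apply le_INR in Hle. rewrite mult_INR in Hle.
      assert (INR K * INR ((s - (n - 1)) / K) * lam <= INR ta * lam) by (apply Rmult_le_compat_r; lra).
      nra.
    + unfold K in *. nia.
  - intros d' Hd'. apply (GLB n phi (ORR phi) w lam d' Hn Hphi (ORR_adm n phi) (ORR_cyc n phi) Hl1 Hd').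
Qed.

Lemma sum_ind_ORR K e m : (0 < K)%nat -> (m < K)%nat ->
  sum_f_R0 (fun t => if Nat.eqb (e mod K) (t mod K) then 1 else 0) m =
  if Nat.leb (e mod K) m then 1 else 0.
Proof.
  intros HK. induction m as [|m IH]; intros Hm.
  - simpl. rewrite Nat.mod_0_l by lia. destruct (e mod K); reflexivity.
  - simpl sum_f_R0. rewrite IH by lia. rewrite (Nat.mod_small (S m)) by lia.
    destruct (Nat.leb_spec (e mod K) m); destruct (Nat.eqb_spec (e mod K) (S m));
      destruct (Nat.leb_spec (e mod K) (S m)); try lia; lra.
Qed.

Theorem theorem3 (n phi : nat) (w : nat -> R) :
  (0 < n)%nat -> (phi <= n - 1)%nat ->
  (forall j, (j < n)%nat -> 0 < w j) ->
  deadline_optimal n phi w (ORR phi) /\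
  tau_star_is n (ORR phi) w (Some (n + phi)%nat) /\
  (forall e, (e < n)%nat -> rate (ORR phi) e = 1 / INR (phi + 1)).
Proof.
  intros Hn Hphi Hw.
  pose proof (ORR_tau n phi w Hn Hphi Hw) as HT.
  split; [|split; [exact HT|]].
  - split; [apply ORR_adm|]. split; [apply ORR_cyc|].
    intros p' L L' Hadm Hcyc HL HL'.
    destruct HT as [d0 [Hd0 HT]].
    destruct L as [d|]; destruct L' as [d'|]; simpl; auto.
    + destruct HL as [d1 [Hd1 HL]].
      assert (Hlam : 0 < Rmin d0 d1 / 2 < d0 /\ Rmin d0 d1 / 2 < d1).
      { pose proof (Rmin_l d0 d1). pose proof (Rmin_r d0 d1).
        pose proof (Rmin_pos d0 d1 Hd0 Hd1). lra. }
      destruct (HT (Rmin d0 d1 / 2) ltac:(lra)) as [T1 _].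
      destruct (HL (Rmin d0 d1 / 2) ltac:(lra)) as [_ T2].
      specialize (T2 _ T1).
      destruct HL' as [d2 [Hd2 HL']].
      destruct (HL' (d2 / 2) ltac:(lra)) as [T3 _].
      pose proof (GLB n phi p' w (d2 / 2) d' Hn Hphi Hadm Hcyc ltac:(lra) T3). lia.
    + destruct (HL (n + phi)%nat) as [d1 [Hd1 HL2]].
      assert (Hlam : 0 < Rmin d0 d1 / 2 < d0 /\ Rmin d0 d1 / 2 < d1).
      { pose proof (Rmin_l d0 d1). pose proof (Rmin_r d0 d1).
        pose proof (Rmin_pos d0 d1 Hd0 Hd1). lra. }
      destruct (HT (Rmin d0 d1 / 2) ltac:(lra)) as [T1 _].
      exfalso. apply (HL2 (Rmin d0 d1 / 2) ltac:(lra) T1).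
  - intros e He. unfold rate. change (period (ORR phi)) with (S phi).
    replace (S phi - 1)%nat with phi by lia.
    change (fun t => if act (ORR phi) t e then 1 else 0) with
      (fun t => if Nat.eqb (e mod S phi) (t mod S phi) then 1 else 0).
    rewrite sum_ind_ORR by lia.
    pose proof (Nat.mod_upper_bound e (S phi) ltac:(lia)).
    replace (Nat.leb (e mod S phi) phi) with true by (symmetry; apply Nat.leb_le; lia).
    rewrite Nat.add_1_r. unfold Rdiv. ring.
Qed.
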